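(* Let $S$ be a reduced affine monoid. Then $c(S)$ is the minimal non-negative integer $d$ such that the kernel of $\pi_R:R[x_a\mid a\in\mathcal{A}(S)]\to R[S]$ is generated as an ideal by binomials of degree at most $d$, for some commutative ring $R$ (with identity); moreover, for a given $d$ this condition holds for some commutative ring $R$ if and only if it holds for every commutative ring $R$.
   Context: A monoid is a commutative cancellative semigroup with identity, written multiplicatively; it is affine if it is a finitely generated submonoid of a finitely generated free abelian group, and reduced if the identity is its only invertible element. $\mathcal{A}(S)$ is the finite set of atoms of $S$; for $\alpha\in\mathbb{N}_0^{\mathcal{A}(S)}$ set $|\alpha|=\sum_a\alpha(a)$, $a^{\alpha}=\prod_a a^{\alpha(a)}$. The catenary degree $c(S)$: for $\alpha,\gamma\in\mathbb{N}_0^{\mathcal{A}(S)}$ let $\gcd(\alpha,\gamma)(a)=\min\{\alpha(a),\gamma(a)\}$ and $d(\alpha,\gamma)=\max\{|\alpha-\gcd(\alpha,\gamma)|,|\gamma-\gcd(\alpha,\gamma)|\}$; $c(S)$ is the minimal non-negative integer $d$ such that whenever $a^{\alpha}=a^{\gamma}$ there is a sequence $\alpha=\alpha^{(0)},\dots,\alpha^{(k)}=\gamma$ with $a^{\alpha^{(j)}}=a^{\alpha^{(j+1)}}$ and $d(\alpha^{(j)},\alpha^{(j+1)})\le d$ for all $j$. For a commutative ring $R$, $R[x_a\mid a\in\mathcal{A}(S)]$ is the polynomial ring with the standard grading ($\deg x_a=1$), $R[S]$ is the semigroup ring, and $\pi_R$ is the $R$-algebra homomorphism with $x^{\alpha}=\prod_a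 x_a^{\alpha(a)}\mapsto a^{\alpha}$. A binomial is an element $x^{\alpha}-x^{\gamma}$. *)

(* Defs.v *)
From HB Require Import structures.
From mathcomp Require Import all_boot all_order all_algebra.
From mathcomp Require Import freeg mpoly.

Set Implicit Arguments.
Unset Strict Implicit.
Unset Printing Implicit Defensive.

Import Order.TTheory GRing.Theory.
Local Open Scope ring_scope.

(* Affine monoids: S is a subset of the free abelian group Z^n = 'rV[int]_n *)
(* (written additively).                                                   *)

Definition is_submonoid (n : nat) (S : 'rV[int]_n -> Prop) : Prop :=
  S 0 /\ (forall x y, S x -> S y -> S (x + y)).

Definition finitely_generated (n : nat) (S : 'rV[int]_n -> Prop) : Prop :=
  exists (m : nat) (g : 'I_m -> 'rV[int]_n),
    forall x, S x <-> exists c : 'I_m -> nat, x = \sum_(i < m) g i *+ c i.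

Definition affine_monoid (n : nat) (S : 'rV[int]_n -> Prop) : Prop :=
  is_submonoid S /\ finitely_generated S.

Definition unit_of (n : nat) (S : 'rV[int]_n -> Prop) (x : 'rV[int]_n) : Prop :=
  S x /\ exists y, S y /\ x + y = 0.

Definition reduced_monoid (n : nat) (S : 'rV[int]_n -> Prop) : Prop :=
  forall x, unit_of S x -> x = 0.

Definition atom (n : nat) (S : 'rV[int]_n -> Prop) (u : 'rV[int]_n) : Prop :=
  S u /\ ~ unit_of S u /\
  (forall x y, S x -> S y -> u = x + y -> unit_of S x \/ unit_of S y).

(* a : 'I_k -> 'rV[int]_n is an enumeration (without repetition) of the
   atoms of S; the variables x_a of the polynomial ring are indexed by 'I_k. *)
Definition atom_enum (n k : nat) (S : 'rV[int]_n -> Prop)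
  (a : 'I_k -> 'rV[int]_n) : Prop :=
  injective a /\ (forall u, atom S u <-> exists i, a i = u).

(* Factorizations alpha in N_0^{A(S)} are the monomials 'X_{1..k}.        *)

Definition fact_val (n k : nat) (a : 'I_k -> 'rV[int]_n) (al : 'X_{1..k})
  : 'rV[int]_n := \sum_(i < k) a i *+ al i.

Definition fgcd (k : nat) (al ga : 'X_{1..k}) : 'X_{1..k} :=
  [multinom minn (al i) (ga i) | i < k].

Definition fdist (k : nat) (al ga : 'X_{1..k}) : nat :=
  maxn (mdeg al - mdeg (fgcd al ga))%N (mdeg ga - mdeg (fgcd al ga))%N.

Definition catenary_ok (n k : nat) (a : 'I_k -> 'rV[int]_n) (d : nat) : Prop :=
  forall al ga : 'X_{1..k}, fact_val a al = fact_val a ga ->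
    exists s : seq 'X_{1..k},
      last al s = ga /\
      path (fun b c => (fact_val a b == fact_val a c) && (fdist b c <= d)%N) al s.

Definition is_min_nat (P : nat -> Prop) (d : nat) : Prop :=
  P d /\ forall e, P e -> (d <= e)%N.

Definition catenary_degree_is (n k : nat) (a : 'I_k -> 'rV[int]_n) (c : nat)
  : Prop := is_min_nat (catenary_ok a) c.

(* The R-algebra map pi_R : R[x_a] -> R[S], x^alpha |-> a^alpha.  R[S] is  *)
(* realised inside the free R-module {freeg 'rV[int]_n / R} (= R[Z^n]),     *)
(* which contains R[S] as the R-span of the basis elements << s >>, s in S. *)

Definition piR (R : comNzRingType) (n k : nat) (a : 'I_k -> 'rV[int]_n)
  (p : {mpoly R[k]}) : {freeg 'rV[int]_n / R} :=
  \sum_(m <- msupp p) << p@_m *g fact_val a m >>.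

Definition in_ker_pi (R : comNzRingType) (n k : nat) (a : 'I_k -> 'rV[int]_n)
  (p : {mpoly R[k]}) : Prop := piR a p = 0.

Definition binomial_deg_le (R : comNzRingType) (k d : nat) (f : {mpoly R[k]})
  : Prop :=
  exists al ga : 'X_{1..k}, f = 'X_[al] - 'X_[ga] /\
    (mdeg al <= d)%N /\ (mdeg ga <= d)%N.

Definition in_ideal_gen (R : comNzRingType) (k : nat)
  (G : {mpoly R[k]} -> Prop) (p : {mpoly R[k]}) : Prop :=
  exists s : seq ({mpoly R[k]} * {mpoly R[k]}),
    (forall x, x \in s -> G x.2) /\ p = \sum_(x <- s) x.1 * x.2.

Definition ker_gen_binom_le (R : comNzRingType) (n k : nat)
  (a : 'I_k -> 'rV[int]_n) (d : nat) : Prop :=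
  exists G : {mpoly R[k]} -> Prop,
    (forall f, G f -> binomial_deg_le d f) /\
    (forall p, in_ker_pi a p <-> in_ideal_gen G p).

(* Main.v *)
Require Import Defs.
From HB Require Import structures.
From mathcomp Require Import all_boot all_order all_algebra.
From mathcomp Require Import freeg mpoly.
From mathcomp Require Import zify.
From Stdlib Require Import ClassicalEpsilon.

Set Implicit Arguments.
Unset Strict Implicit.
Unset Printing Implicit Defensive.
Import Order.TTheory GRing.Theory.


Section Phi.
Local Open Scope ring_scope.
Variables (R : comNzRingType) (k : nat).
Implicit Types (p q : {mpoly R[k]}) (f : 'X_{1..k} -> R).

Definition Phi f p : R := \sum_(m <- msupp p) p@_m * f m.

Lemma Phi_sub f p (s : seq 'X_{1..k}) : uniq s -> {subset msupp p <= s} ->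
  Phi f p = \sum_(m <- s) p@_m * f m.
Proof.
move=> us sub; rewrite [RHS](bigID (fun m => m \in msupp p)) /=.
rewrite [X in _ = _ + X]big1 ?addr0; last first.
  by move=> m /memN_msupp_eq0 ->; rewrite mul0r.
rewrite -big_filter /Phi; apply: perm_big; apply: uniq_perm => //.
  by rewrite filter_uniq.
by move=> m; rewrite mem_filter; case: (boolP (m \in msupp p)) => // /sub ->.
Qed.

Lemma PhiD f p q : Phi f (p + q) = Phi f p + Phi f q.
Proof.
set s := undup (msupp p ++ msupp q ++ msupp (p + q)).
have us : uniq s by apply: undup_uniq.
rewrite (Phi_sub f (p:=p+q) us); last by move=> m h; rewrite mem_undup !mem_cat h !orbT.
rewrite (Phi_sub f (p:=p) us); last by move=> m h; rewrite mem_undup !mem_cat h.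
rewrite (Phi_sub f (p:=q) us); last by move=> m h; rewrite mem_undup !mem_cat h !orbT.
by rewrite -big_split /=; apply: eq_bigr => m _; rewrite mcoeffD mulrDl.
Qed.

Lemma PhiZ f c p : Phi f (c *: p) = c * Phi f p.
Proof.
rewrite (Phi_sub f (p:=c *: p) (msupp_uniq p)); last exact: msuppZ_le.
by rewrite /Phi mulr_sumr; apply: eq_bigr => m _; rewrite mcoeffZ mulrA.
Qed.

Lemma PhiN f p : Phi f (- p) = - Phi f p.
Proof. by rewrite -scaleN1r PhiZ mulN1r. Qed.

Lemma PhiB f p q : Phi f (p - q) = Phi f p - Phi f q.
Proof. by rewrite PhiD PhiN. Qed.

Lemma Phi0 f : Phi f 0 = 0.
Proof. by rewrite /Phi msupp0 big_nil. Qed.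

Lemma Phi_sum f (I : Type) (r : seq I) (F : I -> {mpoly R[k]}) :
  Phi f (\sum_(i <- r) F i) = \sum_(i <- r) Phi f (F i).
Proof.
elim: r => [|x r ih]; first by rewrite !big_nil Phi0.
by rewrite !big_cons PhiD ih.
Qed.

Lemma PhiX f m : Phi f 'X_[m] = f m.
Proof. by rewrite /Phi msuppX big_seq1 mcoeffX eqxx mul1r. Qed.

Lemma Phi_ext f g p : f =1 g -> Phi f p = Phi g p.
Proof. by move=> e; apply: eq_bigr => m _; rewrite e. Qed.

Lemma Phi_binom f h b d : (forall m, f (m + b)%MM = f (m + d)%MM) ->
  Phi f (h * ('X_[b] - 'X_[d])) = 0.
Proof.
move=> e; rewrite {1}[h]mpolyE mulr_suml Phi_sum big1 // => m _.
rewrite -scalerAl mulrBr -!mpolyXD PhiZ PhiB !PhiX e subrr mulr0 //.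
Qed.

End Phi.



Section Main.
Local Open Scope ring_scope.
Variables (n k : nat) (a : 'I_k -> 'rV[int]_n).

Lemma fact_valD (m1 m2 : 'X_{1..k}) :
  fact_val a (m1 + m2)%MM = fact_val a m1 + fact_val a m2.
Proof.
rewrite /fact_val -big_split /=; apply: eq_bigr => i _.
by rewrite mnmDE mulrnDr.
Qed.

Definition fib (R : comNzRingType) (v : 'rV[int]_n) (m : 'X_{1..k}) : R :=
  (fact_val a m == v)%:R.

Lemma coeff_piR (R : comNzRingType) (p : {mpoly R[k]}) v :
  coeff v (piR a p) = Phi (fib R v) p.
Proof.
rewrite /piR raddf_sum /Phi; apply: eq_bigr => m _ /=.
rewrite [LHS](@coeffU R). by [].
Qed.

Lemma in_kerP (R : comNzRingType) (p : {mpoly R[k]}) :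
  in_ker_pi a p <-> forall v, Phi (fib R v) p = 0.
Proof.
split.
  by move=> h v; rewrite -coeff_piR h coeff0.
move=> h; apply/eqP/freeg_eqP => v; rewrite coeff0 coeff_piR; exact: h.
Qed.

Section Ideal.
Variables (R : comNzRingType) (G : {mpoly R[k]} -> Prop).
Local Notation I := (in_ideal_gen G).

Lemma I0 : I 0.
Proof. by exists [::]; split => //; rewrite big_nil. Qed.

Lemma ID p q : I p -> I q -> I (p + q).
Proof.
move=> [s [hs ->]] [t [ht ->]]; exists (s ++ t); split.
  by move=> x; rewrite mem_cat => /orP[/hs|/ht].
by rewrite big_cat.
Qed.

Lemma IM h g : G g -> I (h * g).
Proof.
by move=> hg; exists [:: (h, g)]; split; [move=> x; rewrite inE => /eqP -> | rewrite big_seq1].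
Qed.

Lemma IZ c p : I p -> I (c *: p).
Proof.
move=> [s [hs ->]]; exists [seq (c *: x.1, x.2) | x <- s]; split.
  by move=> x /mapP [y /hs hy ->].
by rewrite big_map scaler_sumr; apply: eq_bigr => x _; rewrite scalerAl.
Qed.

Lemma Isum (T : Type) (r : seq T) (F : T -> {mpoly R[k]}) :
  (forall i, I (F i)) -> I (\sum_(i <- r) F i).
Proof.
move=> h; elim: r => [|x r ih]; first by rewrite big_nil; exact: I0.
by rewrite big_cons; apply: ID.
Qed.

End Ideal.

End Main.



Section Dir1.
Local Open Scope ring_scope.
Variables (n k : nat) (a : 'I_k -> 'rV[int]_n) (d : nat) (R : comNzRingType).

Definition Gd (f : {mpoly R[k]}) : Prop :=
  exists b c : 'X_{1..k}, f = 'X_[b] - 'X_[c] /\ (mdeg b <= d)%N /\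
    (mdeg c <= d)%N /\ fact_val a b = fact_val a c.

Lemma fgcd_le_l (b c : 'X_{1..k}) : (fgcd b c <= b)%MM.
Proof. by apply/mnm_lepP => i; rewrite mnmE geq_minl. Qed.
Lemma fgcd_le_r (b c : 'X_{1..k}) : (fgcd b c <= c)%MM.
Proof. by apply/mnm_lepP => i; rewrite mnmE geq_minr. Qed.

Lemma step (b c : 'X_{1..k}) : fact_val a b = fact_val a c ->
  (fdist b c <= d)%N -> in_ideal_gen Gd ('X_[b] - 'X_[c]).
Proof.
move=> ev hd; set g := fgcd b c.
have hb : ((b - g) + g)%MM = b by apply: submK; apply: fgcd_le_l.
have hc : ((c - g) + g)%MM = c by apply: submK; apply: fgcd_le_r.
have -> : 'X_[b] - 'X_[c] = 'X_[g] * ('X_[b - g] - 'X_[c - g]) :> {mpoly R[k]}.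
  by rewrite -{1}hb -{1}hc !mpolyXD -mulrBl mulrC.
apply: IM; exists (b - g)%MM, (c - g)%MM; split => //.
have db := mdegD (b - g)%MM g; have dc := mdegD (c - g)%MM g.
rewrite hb in db; rewrite hc in dc.
move: hd; rewrite /fdist -/g geq_max => /andP [h1 h2].
split; first by lia.
split; first by lia.
apply: (@addIr _ (fact_val a g)); rewrite -!fact_valD hb hc //.
Qed.

Definition crel (b c : 'X_{1..k}) :=
  (fact_val a b == fact_val a c) && (fdist b c <= d)%N.

Lemma chain x s : path crel x s -> in_ideal_gen Gd ('X_[x] - 'X_[last x s]).
Proof.
elim: s x => [|y s ih] x /=; first by rewrite subrr => _; exact: I0.

move=> /andP [/andP [/eqP e hd] hp].
have -> : 'X_[x] - 'X_[last y s] = ('X_[x] - 'X_[y]) + ('X_[y] - 'X_[last y s]) :> {mpoly R[k]}.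
  by rewrite addrA subrK.
by apply: ID; [apply: step | apply: ih].
Qed.

End Dir1.

Section Dir1b.
Local Open Scope ring_scope.
Variables (n k : nat) (a : 'I_k -> 'rV[int]_n) (d : nat) (R : comNzRingType).

Definition rep (mu : 'X_{1..k}) : 'X_{1..k} :=
  xchoose (ex_intro (fun m' => fact_val a m' == fact_val a mu) mu (eqxx _)).

Lemma rep_val mu : fact_val a (rep mu) = fact_val a mu.
Proof. exact/eqP/(xchooseP (ex_intro (fun m' => fact_val a m' == fact_val a mu) mu (eqxx _))). Qed.

Lemma rep_eq mu mu' : fact_val a mu = fact_val a mu' -> rep mu = rep mu'.
Proof. by move=> e; apply: eq_xchoose => x; rewrite e. Qed.

Lemma dir1 : catenary_ok a d -> ker_gen_binom_le R a d.
Proof.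
move=> hc; exists (Gd a d (R := R)); split.
  by move=> f [b [c [-> [hb [hc' _]]]]]; exists b, c.
move=> p; split; last first.
  move=> [s [hs ->]]; apply/in_kerP => v.
  rewrite Phi_sum big_seq big1 // => x /hs [b [c [-> [_ [_ e]]]]].
  by apply: Phi_binom => m; rewrite /fib !fact_valD e.
move/in_kerP => hker.
have q0 : \sum_(m <- msupp p) p@_m *: 'X_[rep m] = 0 :> {mpoly R[k]}.
  apply/mpolyP => mu; rewrite mcoeff0 raddf_sum /=.
  under eq_bigr => m _ do rewrite mcoeffZ mcoeffX.
  change (Phi (fun m => ((rep m == mu)%:R : R)) p = 0).
  case: (eqVneq (rep mu) mu) => hmu.
    rewrite (@Phi_ext _ _ _ (fib a R (fact_val a mu))); first exact: hker.
    move=> m; rewrite /fib.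
    have -> : (rep m == mu) = (fact_val a m == fact_val a mu); last by [].
    apply/idP/idP => [/eqP <-|/eqP e]; first by rewrite rep_val.
    by rewrite (rep_eq e) hmu.
  rewrite (@Phi_ext _ _ _ (fun _ => 0)); first by rewrite /Phi big1 // => m _; rewrite mulr0.
  move=> m; case: (eqVneq (rep m) mu) => // e; exfalso; move/eqP: hmu; apply.
  by rewrite -e; apply: rep_eq; rewrite rep_val.
rewrite [p]mpolyE.
have -> : \sum_(m <- msupp p) p@_m *: 'X_[m] =
   \sum_(m <- msupp p) p@_m *: ('X_[m] - 'X_[rep m]) +
   \sum_(m <- msupp p) p@_m *: 'X_[rep m] :> {mpoly R[k]}.
  by rewrite -big_split; apply: eq_bigr => m _ /=; rewrite -scalerDr subrK.
rewrite q0 addr0; apply: Isum => m; apply: IZ.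
have [s [hl hp]] := hc m (rep m) (esym (rep_val m)).
by rewrite -hl; apply: chain.
Qed.

End Dir1b.



Section Dir2.
Local Open Scope ring_scope.
Variables (n k : nat) (a : 'I_k -> 'rV[int]_n) (d : nat).

Lemma fgcd_shift (m b c : 'X_{1..k}) : fgcd (m + b)%MM (m + c)%MM = (m + fgcd b c)%MM.
Proof. apply/mnmP => i; by rewrite !mnmE addn_minr. Qed.

Lemma fdist_shift_le (m b c : 'X_{1..k}) : (mdeg b <= d)%N -> (mdeg c <= d)%N ->
  (fdist (m + b)%MM (m + c)%MM <= d)%N.
Proof.
move=> hb hc; rewrite /fdist fgcd_shift !mdegD.
have := mdegD m (fgcd b c); lia.
Qed.

Lemma crel_shift (m b c : 'X_{1..k}) : (mdeg b <= d)%N -> (mdeg c <= d)%N ->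
  fact_val a b = fact_val a c -> crel a d (m + b)%MM (m + c)%MM.
Proof.
move=> hb hc e; rewrite /crel !fact_valD e eqxx /=; exact: fdist_shift_le.
Qed.

Lemma dir2 (R : comNzRingType) : ker_gen_binom_le R a d -> catenary_ok a d.
Proof.
move=> [G [hG hker]] al ga e.
pose reach mu := exists s, last al s = mu /\ path (crel a d) al s.
have ext mu nu : reach mu -> crel a d mu nu -> reach nu.
  move=> [s [hl hp]] hr; exists (rcons s nu); split; first by rewrite last_rcons.
  by rewrite rcons_path hp hl.
pose f mu : R := if excluded_middle_informative (reach mu) then 1 else 0.
have hp : in_ker_pi a ('X_[al] - 'X_[ga] : {mpoly R[k]}).
  by apply/in_kerP => v; rewrite PhiB !PhiX /fib e subrr.
have [s [hs hsum]] := (hker _).1 hp.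
have : Phi f ('X_[al] - 'X_[ga]) = 0.
  rewrite hsum Phi_sum big_seq big1 // => x /hs hx.
  have [b [c [ex [hb hc]]]] := hG _ hx.
  have ebc : fact_val a b = fact_val a c.
    have : in_ker_pi a x.2 by apply/(hker _).2; rewrite -[x.2]mul1r; apply: IM.
    move/in_kerP/(_ (fact_val a b)); rewrite ex PhiB !PhiX /fib eqxx.
    case: eqP => // _; rewrite subr0 => /eqP; rewrite oner_eq0 //.
  rewrite ex; apply: Phi_binom => m; rewrite /f.
  case: excluded_middle_informative => h1; case: excluded_middle_informative => h2 //.
    by exfalso; apply: h2; apply: ext h1 _; apply: crel_shift.
  by exfalso; apply: h1; apply: ext h2 _; apply: crel_shift.
rewrite PhiB !PhiX /f.
destruct (excluded_middle_informative (reach al)) as [r|h]; last by exfalso; apply: h; exists [::].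
destruct (excluded_middle_informative (reach ga)) as [[t ht]|r']; first by move=> _; exists t.
rewrite /=.
by rewrite subr0 => /eqP; rewrite oner_eq0.
Qed.

End Dir2.


Lemma min_nat_iff (P Q : nat -> Prop) c : (forall d, P d <-> Q d) ->
  is_min_nat P c <-> is_min_nat Q c.
Proof.
move=> h; split=> [[h1 h2]|[h1 h2]]; split.
- by apply/h.
- by move=> e /h; apply: h2.
- by apply/h.
- by move=> e /h; apply: h2.
Qed.

Theorem corollary2p6 (n k : nat) (S : 'rV[int]_n -> Prop)
  (a : 'I_k -> 'rV[int]_n) :
  affine_monoid S -> reduced_monoid S -> atom_enum S a ->
  (forall c : nat,
     catenary_degree_is a c <->
     is_min_nat (fun d => exists R : comNzRingType, ker_gen_binom_le R a d) c) /\
  (forall d : nat,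
     (exists R : comNzRingType, ker_gen_binom_le R a d) <->
     (forall R : comNzRingType, ker_gen_binom_le R a d)).
Proof.
move=> _ _ _.
have eqv d : (exists R : comNzRingType, ker_gen_binom_le R a d) <-> catenary_ok a d.
  split; first by move=> [R h]; exact: dir2 h.
  by move=> h; exists int; apply: dir1.
split.
  move=> c; apply: min_nat_iff => d; exact: iff_sym (eqv d).
move=> d; split.
  by move/eqv => h R; apply: dir1.
by move=> h; exists int; apply: h.
Qed.
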